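(* Let $S$ be a finite set, $T$ a set, $\pi:S\to T$ a map, and $\mathbb{P}$ a $\pi$-measurable probability measure on $S$. Let $J\ge1$, let $T_1,\dots,T_J$ be sets and $\pi_j:S\to T_j$ maps forming a $\pi$-inverse system, let $B_1,\dots,B_J\subseteq S$, and let $\delta_1,\dots,\delta_J\in[0,1/2]$. Let $\mathbb{P}_0,\dots,\mathbb{P}_J$, $\alpha_j$, $M_j^{(1)},M_j^{(2)}$ be as defined in the context. Assume that $B_j$ is $\pi_j$-measurable for every $1\le j\le J$. If \[ \sum_{j=1}^J\min\left\{M_j^{(1)},\frac{M_j^{(2)}}{4\delta_j(1-\delta_j)}\right\}<1, \] then $\mathbb{P}_J\big(\bigcup_{1\le j\le J}B_j\big)<1$.
   Context: A function $f:S\to\mathbb{C}$ is $\pi$-measurable if $f(x)=f(x')$ whenever $\pi(x)=\pi(x')$; a subset $B\subseteq S$ is $\pi$-measurable if $x\in B$, $x'\in S$, $\pi(x')=\pi(x)$ imply $x'\in B$. A probability measure on the finite set $S$ is identified with its mass function $x\mapsto\mathbb{P}(x)$, and it is $\pi$-measurable if this function is. The maps $\pi_1,\dots,\pi_J$ form a $\pi$-inverse system if, setting $\pi_0=\pi$, for every $1\le j\le J$ and $x,x'\in S$, $\pi_j(x)=\pi_j(x')$ implies $\pi_{j-1}(x)=\pi_{j-1}(x')$. Construction: $\mathbb{P}_0=\mathbb{P}$; for $1\le j\le J$ and $x\in S$ let $F_{j-1}(x)=\{x'\in S:\pi_{j-1}(x')=\pi_{j-1}(x)\}$, $\alpha_j(x)=|F_{j-1}(x)\cap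 B_j|/|F_{j-1}(x)|$, and \[ \mathbb{P}_j(x)=\mathbb{P}_{j-1}(x)\cdot\begin{cases}\dfrac{1_{x\notin B_j}}{1-\alpha_j(x)}, & \alpha_j(x)<\delta_j,\\[2mm] \dfrac{\alpha_j(x)-1_{x\in B_j}\delta_j}{\alpha_j(x)(1-\delta_j)}, & \alpha_j(x)\ge\delta_j,\end{cases} \] where in the degenerate case $\alpha_j(x)=0$ (possible in the second case only if $\delta_j=0$) the factor is taken to be $1$. Each $\mathbb{P}_j$ is a probability measure on $S$. For $f:S\to\mathbb{C}$ set $\mathbb{E}_j[f]=\sum_{x\in S}f(x)\mathbb{P}_j(x)$, and $M_j^{(1)}=\mathbb{E}_{j-1}[\alpha_j]$, $M_j^{(2)}=\mathbb{E}_{j-1}[\alpha_j^2]$. When $\delta_j=0$ the term $M_j^{(2)}/(4\delta_j(1-\delta_j))$ is interpreted as $+\infty$, so the minimum equals $M_j^{(1)}$. *)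

(* Defs.v *)
From HB Require Import structures.
From mathcomp Require Import all_boot all_order all_algebra.
From mathcomp Require Import boolp.
Set Implicit Arguments. Unset Strict Implicit. Unset Printing Implicit Defensive.
Import Order.TTheory GRing.Theory Num.Theory.
Local Open Scope ring_scope.

Section Construction.
Variables (R : realFieldType) (S : finType) (T : Type) (pi : S -> T).
Variables (Ts : nat -> Type) (pis : forall j : nat, S -> Ts j).
(* pis j is pi_j for j >= 1; pi_0 := pi (pis 0 is never used). *)
Variables (B : nat -> {set S}) (delta : nat -> R) (P : S -> R).

Definition same (j : nat) (x x' : S) : bool :=
  if j is j'.+1 then `[< pis j x = pis j x' >] else `[< pi x = pi x' >].

Definition fiber (j : nat) (x : S) : {set S} := [set x' | same j x' x].

Definition alpha (j : nat) (x : S) : R :=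
  (#|fiber j.-1 x :&: B j|)%:R / (#|fiber j.-1 x|)%:R.

Definition factor (j : nat) (x : S) : R :=
  let a := alpha j x in
  if a < delta j then (if x \in B j then 0 else 1 / (1 - a))
  else if a == 0 then 1
  else (a - (x \in B j)%:R * delta j) / (a * (1 - delta j)).

Fixpoint Pj (j : nat) : S -> R :=
  match j with
  | 0 => P
  | j'.+1 => fun x => Pj j' x * factor j x
  end.

Definition Ej (j : nat) (f : S -> R) : R := \sum_(x : S) f x * Pj j x.

Definition M1 (j : nat) : R := Ej j.-1 (alpha j).
Definition M2 (j : nat) : R := Ej j.-1 (fun x => alpha j x ^+ 2).

(* min{M1, M2/(4 delta (1-delta))}, with the delta = 0 convention giving M1 *)
Definition min_term (j : nat) : R :=
  if delta j == 0 then M1 j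
  else Num.min (M1 j) (M2 j / (4 * delta j * (1 - delta j))).
End Construction.

(* Main.v *)
Require Import Defs.
From HB Require Import structures.
From mathcomp Require Import all_boot all_order all_algebra.
From mathcomp Require Import boolp.
Import Order.TTheory GRing.Theory Num.Theory.
Local Open Scope ring_scope.
From mathcomp Require Import ring lra zify.
Set Implicit Arguments. Unset Strict Implicit.

Section H.
Variables (R : realFieldType) (S : finType) (T : Type) (pi : S -> T).
Variables (Ts : nat -> Type) (pis : forall j : nat, S -> Ts j).
Variables (B : nat -> {set S}) (delta : nat -> R) (P : S -> R).

Local Notation same := (same pi pis).
Local Notation fiber := (fiber pi pis).
Local Notation alpha := (alpha R pi pis B).
Local Notation factor := (factor pi pis B delta).
Local Notation Pj := (Pj pi pis B delta P).

Lemma same_refl k x : same k x x.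
Proof. by case: k => [|k] /=; apply/asboolP. Qed.
Lemma same_sym k x y : same k x y -> same k y x.
Proof. by case: k => [|k] /= /asboolP H; apply/asboolP. Qed.
Lemma same_trans k x y z : same k x y -> same k y z -> same k x z.
Proof. by case: k => [|k] /= /asboolP H1 /asboolP H2; apply/asboolP; rewrite H1. Qed.

Lemma fiber_eq k x y : same k x y -> fiber k x = fiber k y.
Proof.
move=> H; apply/setP => z; rewrite !inE.
apply/idP/idP => Hz; [exact: same_trans Hz H | exact: same_trans Hz (same_sym H)].
Qed.

Lemma card_fiber_gt0 k x : (0 < #|fiber k x|)%N.
Proof. by apply/card_gt0P; exists x; rewrite inE same_refl. Qed.

Lemma alpha_meas k x y : same k x y -> alpha k.+1 x = alpha k.+1 y.
Proof. by move=> H; rewrite /Defs.alpha /= (fiber_eq H). Qed.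

Lemma alpha_ge0 j x : 0 <= alpha j x.
Proof. by rewrite /Defs.alpha divr_ge0 ?ler0n. Qed.

Lemma alpha_le1 j x : alpha j x <= 1.
Proof.
rewrite /Defs.alpha ler_pdivrMr ?ltr0n ?card_fiber_gt0 // mul1r ler_nat.
by apply: subset_leq_card; apply: subsetIl.
Qed.

Lemma alpha_gt0 j x : x \in B j -> 0 < alpha j x.
Proof.
move=> Hx; rewrite /Defs.alpha divr_gt0 ?ltr0n ?card_fiber_gt0 //.
by apply/card_gt0P; exists x; rewrite !inE same_refl.
Qed.

Definition meas k (G : S -> R) := forall x y, same k x y -> G x = G y.

Lemma avg_lemma k (G : S -> R) : meas k G ->
  \sum_x G x * alpha k.+1 x = \sum_x G x * (x \in B k.+1)%:R.
Proof.
move=> HG.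
have E1 x : G x * alpha k.+1 x =
   \sum_y (if (y \in fiber k x) && (y \in B k.+1) then G x / (#|fiber k x|)%:R else 0).
  rewrite -big_mkcond /= -[in RHS]big_set /= sumr_const.
  rewrite /Defs.alpha /= -mulr_natr.
  have -> : [set i in fiber k x | i \in B k.+1] = fiber k x :&: B k.+1.
    by apply/setP => y; rewrite !inE.
  ring.
rewrite (eq_bigr _ (fun x _ => E1 x)) exchange_big /=.
apply: eq_bigr => y _.
have E2 x : (if (y \in fiber k x) && (y \in B k.+1) then G x / (#|fiber k x|)%:R else 0)
   = (y \in B k.+1)%:R * (if x \in fiber k y then G y / (#|fiber k y|)%:R else 0).
  case: (boolP (x \in fiber k y)) => Hx; case: (y \in B k.+1);
    rewrite /= ?mul1r ?mul0r ?andbT ?andbF //.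
  - move: Hx; rewrite inE => Hx.
    by rewrite inE (same_sym Hx) (HG _ _ Hx) (fiber_eq Hx).
  - by rewrite inE; case: ifP => // H; move: Hx; rewrite inE (same_sym H).
rewrite (eq_bigr _ (fun x _ => E2 x)) -mulr_sumr -big_mkcond /= sumr_const.
have Hc : (#|fiber k y|%:R : R) != 0 by rewrite pnatr_eq0 -lt0n card_fiber_gt0.
by rewrite -[G y / _ *+ _]mulr_natr divfK // mulrC.
Qed.

Lemma union_bound (F : S -> R) (r : seq nat) : (forall x, 0 <= F x) ->
  \sum_(x in \bigcup_(j <- r) B j) F x <= \sum_(j <- r) \sum_(x in B j) F x.
Proof.
move=> HF; elim: r => [|a r IH].
  by rewrite !big_nil big_set0.
rewrite !big_cons; apply: le_trans (lerD (lexx _) IH).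
rewrite !(big_mkcond (fun x => x \in _)) /= -big_split /=.
apply: ler_sum => x _; rewrite in_setU.
case: (x \in B a); case: (x \in \bigcup_(j <- r) B j) => /=; have := HF x; lra.
Qed.

Variable J : nat.
Hypothesis Hmon : forall j, (1 <= j <= J)%N -> forall x x',
      same j x x' -> same j.-1 x x'.
Hypothesis Hdelta : forall j, (1 <= j <= J)%N -> 0 <= delta j <= 1 / 2.
Hypothesis HB : forall j, (1 <= j <= J)%N -> forall x x',
      x \in B j -> same j x' x -> x' \in B j.
Hypothesis HP0 : forall x, 0 <= P x.
Hypothesis HPpi : forall x x', pi x = pi x' -> P x = P x'.

Definition Af (d a : R) : R :=
  if a < d then 1 / (1 - a) else if a == 0 then 1 else a / (a * (1 - d)).
Definition Bf (d a : R) : R :=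
  if a < d then - (1 / (1 - a)) else if a == 0 then 0 else - (d / (a * (1 - d))).
Definition Cf (d a : R) : R :=
  if a < d then 0 else if a == 0 then 1 else (a - d) / (a * (1 - d)).

Lemma factor_dec k x : factor k.+1 x =
  Af (delta k.+1) (alpha k.+1 x) + Bf (delta k.+1) (alpha k.+1 x) * (x \in B k.+1)%:R.
Proof.
rewrite /Defs.factor /Af /Bf.
case: ifP => _; first by case: (x \in B k.+1); rewrite /= ?mulr1 ?mulr0 ?subrr ?addr0.
case: ifP => _; first by rewrite mul0r addr0.
case: (x \in B k.+1); rewrite /= ?mulr1 ?mulr0 ?mul1r ?mul0r ?subr0 ?addr0 //.
by rewrite mulrBl.
Qed.

Lemma factor_B k x : x \in B k.+1 -> factor k.+1 x = Cf (delta k.+1) (alpha k.+1 x).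
Proof. by move=> H; rewrite /Defs.factor /Cf H mul1r. Qed.

Lemma AB1 k x : (k.+1 <= J)%N ->
  Af (delta k.+1) (alpha k.+1 x) + Bf (delta k.+1) (alpha k.+1 x) * alpha k.+1 x = 1.
Proof.
move=> Hk; have /andP[d0 d1] := Hdelta (j:=k.+1) Hk.
have a0 := alpha_ge0 k.+1 x; have a1 := alpha_le1 k.+1 x.
rewrite /Af /Bf; move: a0 a1 d0 d1; set a := alpha k.+1 x; set d := delta k.+1 => a0 a1 d0 d1.
case: ifP => H1.
  have H : 1 - a != 0 by apply: lt0r_neq0; lra.
  by field.
case: ifP => /eqP H2; first by rewrite mul0r addr0.
have H : 1 - d != 0 by apply: lt0r_neq0; lra.
have Ha : a != 0 by apply/eqP.
by field; rewrite H Ha.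
Qed.

Lemma factor_ge0 k x : (k.+1 <= J)%N -> 0 <= factor k.+1 x.
Proof.
move=> Hk; have /andP[d0 d1] := Hdelta (j:=k.+1) Hk.
have a0 := alpha_ge0 k.+1 x; have a1 := alpha_le1 k.+1 x.
rewrite /Defs.factor; move: a0 a1 d0 d1; set a := alpha k.+1 x; set d := delta k.+1 => a0 a1 d0 d1.
case: ifP => H1.
  case: (x \in B k.+1) => //; apply: divr_ge0; lra.
case: ifP => /eqP H2 //.
apply: divr_ge0; last by apply: mulr_ge0; lra.
by case: (x \in B k.+1); rewrite /= ?mul1r ?mul0r; lra.
Qed.

Lemma Pj_ge0 j x : (j <= J)%N -> 0 <= Pj j x.
Proof.
elim: j => [|j IH] Hj /=; first exact: HP0.
by apply: mulr_ge0; [apply: IH; apply: ltnW | apply: factor_ge0].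
Qed.

Lemma factor_meas k x y : (k.+1 <= J)%N -> same k.+1 x y -> factor k.+1 x = factor k.+1 y.
Proof.
move=> Hk H.
have Hk' : (1 <= k.+1 <= J)%N by [].
rewrite /Defs.factor (alpha_meas (@Hmon k.+1 Hk' x y H)).
have -> : (x \in B k.+1) = (y \in B k.+1).
  apply/idP/idP => Hm; [exact: (@HB k.+1 Hk' x y Hm (same_sym H)) | exact: (@HB k.+1 Hk' y x Hm H)].
by [].
Qed.

Lemma Pj_meas j : (j <= J)%N -> meas j (Pj j).
Proof.
elim: j => [|j IH] Hj x y H /=.
  by apply: HPpi; move: H => /= /asboolP.
rewrite (factor_meas Hj H); congr (_ * _).
by apply: IH; [apply: ltnW | exact: (@Hmon j.+1 Hj x y H)].
Qed.

Lemma mass k (C : {set S}) : (k.+1 <= J)%N ->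
  (forall x y, same k x y -> (x \in C) = (y \in C)) ->
  \sum_(x in C) Pj k.+1 x = \sum_(x in C) Pj k x.
Proof.
move=> Hk HC.
pose G x := (x \in C)%:R * Pj k x.
pose a x := Af (delta k.+1) (alpha k.+1 x).
pose b x := Bf (delta k.+1) (alpha k.+1 x).
have E1 x : (if x \in C then Pj k.+1 x else 0) = G x * a x + (G x * b x) * (x \in B k.+1)%:R.
  rewrite /= factor_dec /G /a /b; case: (x \in C); rewrite /= ?mul1r ?mul0r //; ring.
have E2 x : (if x \in C then Pj k x else 0) = G x * a x + (G x * b x) * alpha k.+1 x.
  rewrite -mulrA -mulrDr /a /b AB1 // mulr1 /G.
  by case: (x \in C); rewrite /= ?mul1r ?mul0r.
rewrite !(big_mkcond (fun x => x \in C)) /=.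
rewrite (eq_bigr _ (fun x _ => E1 x)) (eq_bigr _ (fun x _ => E2 x)) !big_split /=.
congr (_ + _); symmetry; apply: avg_lemma.
move=> x y H; rewrite /G /b (HC _ _ H) (alpha_meas H).
by rewrite (@Pj_meas k (ltnW Hk) x y H).
Qed.

Lemma same_mono j k x y : (1 <= j <= k)%N -> (k <= J)%N -> same k x y -> same j x y.
Proof.
move=> /andP[j1 jk]; elim: k jk => [|k IH] jk kJ H.
  by move: j1; rewrite leqn0 in jk; rewrite (eqP jk).
case: (ltngtP j k.+1) jk => // [jk _ | -> _ //].
apply: IH; first by []. exact: ltnW.
exact: (@Hmon k.+1 kJ x y H).
Qed.

Lemma persist j k : (1 <= j <= k)%N -> (k <= J)%N ->
  \sum_(x in B j) Pj k x = \sum_(x in B j) Pj j x.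
Proof.
move=> /andP[j1 jk]; elim: k jk => [|k IH] jk kJ.
  by rewrite leqn0 in jk; rewrite (eqP jk).
case: (ltngtP j k.+1) jk => // [jk _ | -> _ //].
rewrite mass //; first by apply: IH => //; apply: ltnW.
have Hj : (1 <= j <= J)%N by lia.
move=> x y H; apply/idP/idP => Hm.
  apply: (@HB j Hj x y Hm); apply: same_sym; apply: (@same_mono j k) => //.
  by rewrite j1. exact: ltnW.
apply: (@HB j Hj y x Hm); apply: (@same_mono j k) => //.
  by rewrite j1. exact: ltnW.
Qed.

Lemma Cf_bound1 d a : 0 <= a <= 1 -> 0 <= d <= 1/2 -> Cf d a * a <= a.
Proof.
move=> /andP[a0 a1] /andP[d0 d1]; rewrite /Cf.
case: ifP => _; first by rewrite mul0r.
case: ifP => /eqP Ha; first by rewrite Ha mulr0.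
have Hd : 1 - d != 0 by apply: lt0r_neq0; lra.
have Ha' : a != 0 by apply/eqP.
have -> : (a - d) / (a * (1 - d)) * a = (a - d) / (1 - d) by field; rewrite Hd Ha'.
rewrite ler_pdivrMr; last lra.
nra.
Qed.

Lemma Cf_bound2 d a : 0 <= a <= 1 -> 0 < d <= 1/2 ->
  Cf d a * a <= a ^+ 2 / (4 * d * (1 - d)).
Proof.
move=> /andP[a0 a1] /andP[d0 d1].
have q0 : 0 <= 4 * d * (1 - d) by apply: mulr_ge0; [apply: mulr_ge0|]; lra.
have R0 : 0 <= a ^+ 2 / (4 * d * (1 - d)) by apply: divr_ge0 => //; apply: sqr_ge0.
rewrite /Cf.
case: ifP => _; first by rewrite mul0r.
case: ifP => /eqP Ha; first by rewrite Ha mulr0; move: R0; rewrite Ha.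
have Hd : 1 - d != 0 by apply: lt0r_neq0; lra.
have Hd' : d != 0 by apply: lt0r_neq0; lra.
have Ha' : a != 0 by apply/eqP.
rewrite -subr_ge0.
have -> : a ^+ 2 / (4 * d * (1 - d)) - (a - d) / (a * (1 - d)) * a
   = (a - 2 * d) ^+ 2 / (4 * d * (1 - d)).
  by field; rewrite Hd Hd' Ha'.
by apply: divr_ge0 => //; apply: sqr_ge0.
Qed.

Lemma Bj_bound k : (k.+1 <= J)%N ->
  \sum_(x in B k.+1) Pj k.+1 x <= min_term pi pis B delta P k.+1.
Proof.
move=> Hk.
have /andP[d0 d1] := Hdelta (j:=k.+1) Hk.
pose c x := Cf (delta k.+1) (alpha k.+1 x).
have E : \sum_(x in B k.+1) Pj k.+1 x = \sum_x (Pj k x * c x) * alpha k.+1 x.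
  rewrite avg_lemma; last first.
    move=> x y H; rewrite /c (alpha_meas H).
    by rewrite (@Pj_meas k (ltnW Hk) x y H).
  rewrite big_mkcond /=; apply: eq_bigr => x _ /=.
  case: ifP => Hx; last by rewrite mulr0.
  by rewrite factor_B // mulr1.
have Hb x : 0 <= alpha k.+1 x <= 1 by rewrite alpha_ge0 alpha_le1.
have HPk x : 0 <= Pj k x by apply: Pj_ge0; apply: ltnW.
have L1 : \sum_(x in B k.+1) Pj k.+1 x <= M1 pi pis B delta P k.+1.
  rewrite E /M1 /Ej /=; apply: ler_sum => x _.
  rewrite -mulrA [leRHS]mulrC; apply: ler_wpM2l => //; apply: Cf_bound1; [exact: Hb | by rewrite d0 d1].
rewrite /min_term; case: eqP => // dn0.
rewrite le_min L1 /= E /M2 /Ej /= mulr_suml; apply: ler_sum => x _.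
rewrite -mulrA [leRHS]mulrAC [leRHS]mulrC; apply: ler_wpM2l => //.
apply: Cf_bound2 => //; rewrite d1 andbT lt_neqAle d0 andbT eq_sym; exact/eqP.
Qed.
End H.

Theorem theorem2p1 (R : realFieldType) (S : finType) (T : Type) (pi : S -> T)
  (P : S -> R) (J : nat) (Ts : nat -> Type) (pis : forall j : nat, S -> Ts j)
  (B : nat -> {set S}) (delta : nat -> R) :
  (forall x, 0 <= P x) -> \sum_(x : S) P x = 1 ->
  (forall x x', pi x = pi x' -> P x = P x') ->
  (1 <= J)%N ->
  (forall j, (1 <= j <= J)%N -> forall x x',
      same pi pis j x x' -> same pi pis j.-1 x x') ->
  (forall j, (1 <= j <= J)%N -> 0 <= delta j <= 1 / 2) ->
  (forall j, (1 <= j <= J)%N -> forall x x',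
      x \in B j -> same pi pis j x' x -> x' \in B j) ->
  \sum_(1 <= j < J.+1) min_term pi pis B delta P j < 1 ->
  \sum_(x in \bigcup_(1 <= j < J.+1) B j) Pj pi pis B delta P J x < 1.
Proof.
move=> HP0 _ HPpi _ Hmon Hdelta HB Hsum.
apply: le_lt_trans Hsum.
have HF : forall x, 0 <= Pj pi pis B delta P J x.
  by move=> x; apply: (Pj_ge0 pi pis B Hdelta HP0).
apply: le_trans (union_bound B (index_iota 1 J.+1) HF) _.
apply: ler_sum_nat => j /andP[j1 jJ].
destruct j as [|k] => //.
have h1 : (0 < k.+1 <= J)%N by lia.
rewrite (persist Hmon Hdelta HB HPpi h1 (leqnn J)).
exact: (Bj_bound Hmon Hdelta HB HP0 HPpi).
Qed.
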